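(* Let $n\ge1$ and $w=\sqrt{(1-x)/(1+x)}$. Then \[R_n^{B,>}(x)=\frac{x}{2}\Big(\frac{1+x}{2}\Big)^{n-1}(1+w)^n\,B_n\!\Big(\frac{1-w}{1+w}\Big).\]
   Context: $\mathfrak B_n$ is the set of signed permutations $\pi=\pi_1\cdots\pi_n$ (words over $\{\pm1,\dots,\pm n\}$ with $|\pi_1|,\dots,|\pi_n|$ a permutation of $[n]$), compared as integers; set $\pi_0=0$. $\mathrm{run}_B(\pi)$ is $1$ plus the number of $i\in\{1,\dots,n-1\}$ with $\pi_{i-1}<\pi_i>\pi_{i+1}$ or $\pi_{i-1}>\pi_i<\pi_{i+1}$, and $R_n^{B,>}(x)=\sum_{\pi\in\mathfrak B_n,\ \pi_1>0}x^{\mathrm{run}_B(\pi)}$. $\mathrm{des}_B(\pi)=\#\{i\in\{0,\dots,n-1\}:\pi_i>\pi_{i+1}\}$ and $B_n(t)=\sum_{\pi\in\mathfrak B_n}t^{\mathrm{des}_B(\pi)}$ is the type B Eulerian polynomial. (The right-hand side, expanded, is a polynomial in $x$; the identity is one of rational functions in $x$ and $w$ with $w^2=(1-x)/(1+x)$.) *)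

(* Defs.v *)
From mathcomp Require Import all_boot all_order.
From mathcomp Require Import fingroup perm.
From mathcomp Require Import all_algebra.
Set Implicit Arguments. Unset Strict Implicit. Unset Printing Implicit Defensive.
Import Order.TTheory GRing.Theory Num.Theory.
Local Open Scope ring_scope.

(* A signed permutation of [n] is a pair (s, e) with s : 'S_n and sign bits
   e : 'I_n -> bool; its letter at position i+1 (i : 'I_n) is
   pi_{i+1} = (-1)^(e i) * (s i + 1) : int.  This is a bijective encoding of
   the words over {+-1,...,+-n} whose absolute values form a permutation. *)
Definition sperm (n : nat) : finType := ('S_n * {ffun 'I_n -> bool})%type.

Definition spval n (p : sperm n) (i : 'I_n) : int :=
  (-1) ^+ (p.2 i) * ((p.1 i).+1)%:Z.

Definition sword n (p : sperm n) : seq int :=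
  0 :: [seq spval p i | i <- enum 'I_n].

Definition piB n (p : sperm n) (k : nat) : int := nth 0 (sword p) k.

Definition runB n (p : sperm n) : nat :=
  1 + count (fun i =>
     ((piB p i.-1 < piB p i) && (piB p i > piB p i.+1)) ||
     ((piB p i.-1 > piB p i) && (piB p i < piB p i.+1)))
     (iota 1 n.-1).

Definition desB n (p : sperm n) : nat :=
  count (fun i => piB p i > piB p i.+1) (iota 0 n).

Definition RBpos (R : ringType) (n : nat) (x : R) : R :=
  \sum_(p : sperm n | 0 < piB p 1) x ^+ runB p.

Definition eulerianB (R : ringType) (n : nat) : {poly R} :=
  \sum_(p : sperm n) 'X ^+ desB p.

(* Main.v *)
Require Import Defs.
From mathcomp Require Import all_boot all_order fingroup perm all_algebra.
From mathcomp Require Import ring zify.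
Set Implicit Arguments. Unset Strict Implicit. Unset Printing Implicit Defensive.
Import Order.TTheory GRing.Theory Num.Theory.
Local Open Scope ring_scope.

Fixpoint udl (s : seq int) : seq bool :=
  match s with
  | a :: ((b :: _) as s') => (b < a) :: udl s'
  | _ => [::]
  end.

Definition insl (t : seq int) (j : nat) (m : int) := take j t ++ m :: drop j t.

Lemma spvalE n (p : sperm n) i :
  spval p i = if p.2 i then - ((p.1 i).+1)%:Z else ((p.1 i).+1)%:Z.
Proof. by rewrite /spval; case: (p.2 i); rewrite ?expr0 ?expr1 ?mul1r ?mulN1r. Qed.

Definition tl n (p : sperm n) : seq int := [seq spval p i | i <- enum 'I_n].

Lemma size_tl n (p : sperm n) : size (tl p) = n.
Proof. by rewrite size_map size_enum_ord. Qed.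

Lemma nth_tl n (p : sperm n) k (H : (k < n)%N) : nth 0 (tl p) k = spval p (Ordinal H).
Proof.
rewrite /tl (nth_map (Ordinal H)) ?size_enum_ord //; congr spval.
by apply: val_inj; rewrite /= nth_enum_ord.
Qed.

Lemma tl_bound n (p : sperm n) z : z \in tl p -> (- (n%:Z) <= z <= n%:Z) && (z != 0).
Proof.
move=> /mapP[i _ ->]; rewrite spvalE.
have := ltn_ord (p.1 i); case: (p.2 i) => H; lia.
Qed.

Definition insP n (q : sperm n * 'I_n.+1 * bool) : sperm n.+1 :=
  let: (p, j, b) := q in
  (lift_perm j ord_max p.1, [ffun i => if unlift j i is Some k then p.2 k else b]).

Lemma insP_inj n : injective (@insP n).
Proof.
move=> [[p1 j1] b1] [[p2 j2] b2] /= [E1 E2].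
have ej : j1 = j2.
  apply: (@perm_inj _ (lift_perm j1 ord_max p1.1)).
  by rewrite lift_perm_id E1 lift_perm_id.
subst j2.
have eb : b1 = b2.
  by move/ffunP: E2 => /(_ j1); rewrite !ffunE unlift_none.
subst b2; congr (_, _, _).
case: p1 p2 E1 E2 => [s1 e1] [s2 e2] /= E1 E2; congr (_, _).
  apply/permP => k; apply: (@lift_inj _ ord_max).
  move/permP: E1 => /(_ (lift j1 k)).
  by rewrite !lift_perm_lift.
apply/ffunP => k; move/ffunP: E2 => /(_ (lift j1 k)).
by rewrite !ffunE liftK.
Qed.

Lemma card_sperm n : #|sperm n| = (n`! * 2 ^ n)%N.
Proof. by rewrite /sperm card_prod card_Sn card_ffun card_bool card_ord. Qed.

Lemma insP_bij n : bijective (@insP n).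
Proof.
apply: inj_card_bij; first exact: insP_inj.
rewrite /sperm !card_prod !card_Sn !card_ffun !card_bool !card_ord factS expnS.
apply/eqP. lia.
Qed.

Lemma size_insl t j m : (j <= size t)%N -> size (insl t j m) = (size t).+1.
Proof.
move=> H; rewrite /insl size_cat /= size_take size_drop.
case: ltnP => H2; lia.
Qed.

Lemma nth_insl_j t j m : (j <= size t)%N -> nth 0 (insl t j m) j = m.
Proof.
move=> H; by rewrite /insl nth_cat size_takel // ltnn subnn.
Qed.

Lemma nth_insl_bump t j m k : (k < size t)%N -> nth 0 (insl t j m) (bump j k) = nth 0 t k.
Proof.
elim: t j k => [//|x t IH] [|j] k Hk.
  by rewrite /insl /= /bump /=.
case: k Hk => [|k] Hk.
  by rewrite /insl /= /bump.
rewrite bumpS /insl /=.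
by rewrite -(IH j k).
Qed.

Lemma tl_insP n (p : sperm n) j b :
  tl (insP (p, j, b)) = insl (tl p) j (if b then - (n.+1)%:Z else (n.+1)%:Z).
Proof.
have Hj : (j <= size (tl p))%N by rewrite size_tl -ltnS.
apply: (@eq_from_nth _ 0); first by rewrite size_insl // !size_tl.
rewrite size_tl => i Hi.
rewrite (nth_tl _ Hi).
case: (unliftP j (Ordinal Hi)) => [k|] Hk.
  have Hv : i = bump j k by move: (congr1 val Hk).
  rewrite Hk Hv nth_insl_bump ?size_tl // (nth_tl _ (ltn_ord k)).
  rewrite /spval /= ffunE liftK lift_perm_lift.
  have -> : Ordinal (ltn_ord k) = k by apply: val_inj.
  by rewrite lift_max.
have Hv : i = j by move: (congr1 val Hk).
rewrite Hk Hv nth_insl_j // /spval /= ffunE unlift_none lift_perm_id /=.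
by case: b; rewrite ?expr0 ?expr1 ?mul1r ?mulN1r.
Qed.

Fixpoint children (u : seq bool) : seq (seq bool) :=
  match u with
  | [::] => [:: [:: true]; [:: false]]
  | x :: u' => [:: true :: false :: u', false :: true :: u'
                 & map (cons x) (children u')]
  end.
Lemma children_cons x u : children (x :: u) =
  [:: true :: false :: u, false :: true :: u & map (cons x) (children u)].
Proof. by []. Qed.

Lemma ins_children (R : comNzRingType) (N : int) (t : seq int) :
  forall (a : int) (g : seq bool -> R),
  (forall z, z \in a :: t -> - N < z < N) ->
  \sum_(j < (size t).+1) (g (udl (a :: insl t j N)) + g (udl (a :: insl t j (- N))))
  = \sum_(v <- children (udl (a :: t))) g v.
Proof.
elim: t => [|b t IH] a g Hb.
  have Ha := Hb a (mem_head _ _).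
  rewrite big_ord1 /insl /= !big_cons big_nil addr0.
  have -> : (N < a) = false by apply/negbTE; rewrite -leNgt; lia.
  have -> : (- N < a) = true by lia.
  by rewrite addrC.
have udl2 : forall (x y : int) s, udl [:: x, y & s] = (y < x) :: udl (y :: s) by [].
rewrite big_ord_recl.
rewrite (eq_bigr (fun j : 'I_(size t).+1 => g ((b < a) :: udl (b :: insl t j N))
   + g ((b < a) :: udl (b :: insl t j (- N))))); last first.
  move=> j _.
  have E : forall m, insl (b :: t) (lift ord0 j) m = b :: insl t j m by move=> m; rewrite lift0.
  by rewrite !E !udl2.
have -> : insl (b :: t) ord0 N = [:: N, b & t] by [].
have -> : insl (b :: t) ord0 (- N) = [:: - N, b & t] by [].
rewrite udl2 children_cons big_cons big_cons big_map !udl2.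
have Ha := Hb a (mem_head _ _).
have Hbb : - N < b < N by apply: Hb; rewrite !inE eqxx orbT.
have -> : (N < a) = false by apply/negbTE; rewrite -leNgt; lia.
have -> : (- N < a) = true by lia.
have -> : (b < N) = true by lia.
have -> : (b < - N) = false by apply/negbTE; rewrite -leNgt; lia.
rewrite [g _ + g _]addrC -addrA; congr (_ + (_ + _)).
have H := IH b (fun v => g ((b < a) :: v)); cbv beta in H.
rewrite H //.
by move=> z Hz; apply: Hb; rewrite inE Hz orbT.
Qed.

Definition ud n (p : sperm n) : seq bool := udl (sword p).

Lemma sum_sperm_succ (R : comNzRingType) n (g : seq bool -> R) :
  \sum_(p : sperm n.+1) g (ud p) = \sum_(p : sperm n) \sum_(v <- children (ud p)) g v.
Proof.
transitivity (\sum_(q : sperm n * 'I_n.+1 * bool) g (ud (insP q))).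
  by rewrite (reindex (@insP n) (onW_bij _ (@insP_bij n))).
transitivity (\sum_(pj : sperm n * 'I_n.+1) \sum_(b : bool) g (ud (insP (pj, b)))).
  by rewrite [RHS]pair_bigA; apply: eq_bigr => -[pj b] _.
transitivity (\sum_(p : sperm n) \sum_(j : 'I_n.+1) \sum_(b : bool) g (ud (insP (p, j, b)))).
  by rewrite [RHS]pair_bigA; apply: eq_bigr => -[p j] _.
apply: eq_bigr => p _.
have H := @ins_children R (n.+1)%:Z (tl p) 0 g.
rewrite size_tl in H.
rewrite /ud /sword -/(tl p) -H; last first.
  move=> z; rewrite inE => /orP[/eqP ->|/tl_bound]; lia.
apply: eq_bigr => j _; rewrite big_bool /= /sword -!/(tl _) !tl_insP.
by rewrite addrC.
Qed.

Lemma turnE (a b c : int) : a != b -> b != c ->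
  ((a < b) && (b > c)) || ((a > b) && (b < c)) = ((b < a) != (c < b)).
Proof.
move=> H1 H2.
case: (ltgtP a b) H1 => // H1 _; case: (ltgtP b c) H2 => // H2 _ /=; lia.
Qed.

Lemma size_udl s : size (udl s) = (size s).-1.
Proof. elim: s => [|a [|b s] IH] //=; by rewrite IH. Qed.

Lemma nth_udl s i : (i.+1 < size s)%N -> nth false (udl s) i = (nth 0 s i.+1 < nth 0 s i).
Proof.
elim: s i => [|a [|b s] IH] // [|i] Hi //=.
by rewrite IH.
Qed.

Lemma size_ud n (p : sperm n) : size (ud p) = n.
Proof. by rewrite /ud size_udl /sword /= size_tl. Qed.

Lemma nth_ud n (p : sperm n) i : (i < n)%N -> nth false (ud p) i = (piB p i.+1 < piB p i).
Proof. by move=> Hi; rewrite /ud nth_udl // /sword /= size_tl. Qed.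

Lemma piB_neq n (p : sperm n) i : (i < n)%N -> piB p i != piB p i.+1.
Proof.
case: i => [|k] Hk.
  rewrite /piB /sword /= -/(tl p).
  have /tl_bound : nth 0 (tl p) 0 \in tl p by rewrite mem_nth // size_tl.
  by case/andP=> _; rewrite eq_sym.
have Hk' : (k < n)%N by lia.
rewrite /piB /sword /= -/(tl p) (nth_tl _ Hk) (nth_tl _ Hk') !spvalE.
have Hne : (p.1 (Ordinal Hk') : nat) <> p.1 (Ordinal Hk).
  move=> /val_inj /perm_inj /(congr1 val) /=; lia.
by case: (p.2 _); case: (p.2 _); apply/eqP => E; apply: Hne; lia.
Qed.

Fixpoint chgf (x : bool) (u : seq bool) : nat :=
  if u is y :: u' then ((x != y) + chgf y u')%N else 0%N.
Definition chg (u : seq bool) : nat := if u is x :: u' then chgf x u' else 0%N.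
Fixpoint samef (x : bool) (u : seq bool) : nat :=
  if u is y :: u' then ((x == y) + samef y u')%N else 0%N.
Definition same u := if u is x :: u' then samef x u' else 0%N.
Fixpoint W n := if n is n'.+1 then flatten (map children (W n')) else [:: [::]].

Lemma sumW_succ (R : comNzRingType) n (f : seq bool -> R) :
  \sum_(u <- W n.+1) f u = \sum_(u <- W n) \sum_(v <- children u) f v.
Proof. by rewrite /= big_flatten big_map. Qed.

Lemma chgfE x u : chgf x u =
  count (fun i => nth false (x :: u) i != nth false (x :: u) i.+1) (iota 0 (size u)).
Proof.
elim: u x => [|y u IH] x //=.
rewrite IH; congr (_ + _)%N.
have -> : iota 1 (size u) = map (addn 1) (iota 0 (size u)) by rewrite -iotaDl.
by rewrite count_map; apply: eq_count => i /=; rewrite add0n.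
Qed.

Lemma desB_ud n (p : sperm n) : desB p = count id (ud p).
Proof.
rewrite /desB.
have -> : ud p = [seq piB p i.+1 < piB p i | i <- iota 0 n].
  apply: (@eq_from_nth _ false); first by rewrite size_ud size_map size_iota.
  move=> i; rewrite size_ud => Hi.
  by rewrite nth_ud // (nth_map 0%N) ?size_iota // nth_iota.
by rewrite count_map.
Qed.

Lemma runB_ud n (p : sperm n) : runB p = (1 + chg (ud p))%N.
Proof.
rewrite /runB; congr (_ + _)%N.
case E : (ud p) => [|x u].
  have -> : n.-1 = 0%N by rewrite -(size_ud p) E.
  by [].
have Hs : size u = n.-1 by move: (size_ud p); rewrite E /= => <-.
rewrite /= chgfE Hs -E.
have -> : iota 1 n.-1 = map (addn 1) (iota 0 n.-1) by rewrite -iotaDl.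
rewrite count_map.
apply: eq_in_count => i; rewrite mem_iota => /andP[_ Hi] /=.
rewrite add0n in Hi.
have Hi1 : (i < n)%N by lia.
have Hi2 : (i.+1 < n)%N by lia.
rewrite add1n /= (nth_ud _ Hi1) (nth_ud _ Hi2) turnE //.
  exact: piB_neq.
exact: piB_neq.
Qed.

Lemma pos_ud n (p : sperm n) : (0 < n)%N -> (0 < piB p 1) = ~~ nth false (ud p) 0.
Proof.
move=> Hn; rewrite nth_ud //.
have := piB_neq p Hn.
have -> : piB p 0 = 0 by [].
rewrite -leNgt le_eqVlt => H; rewrite (negbTE H) //.
Qed.

Lemma chg_prepend (R : comNzRingType) (f : nat -> R) (x y : bool) (u : seq bool) :
  \sum_(v <- children (y :: u)) f (chgf x v) =
    f (chgf y u + (x != y))%N *+ (2 * chgf y u + 1)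
  + f (chgf y u + 1 + (x != y))%N *+ 2
  + f (chgf y u + 2 + (x != y))%N *+ (2 * samef y u)
  + f (chgf y u + 1 + (x == y))%N.
Proof.
elim: u x y f => [|z u IH] x y f.
  rewrite /= !big_cons big_nil.
  by case: x; case: y => /=; rewrite ?addn0 ?add0n; ring.
rewrite children_cons big_cons big_cons big_map.
have H := IH y z (fun m => f ((x != y) + m)%N); cbv beta in H.
rewrite H {H} /=.
case: x; case: y; case: z => /=;
 rewrite ?plusE ?(addn0, add0n, add1n, addn1, addnS, addSn); ring.
Qed.

Lemma chg_children (R : comNzRingType) (f : nat -> R) (x : bool) (u : seq bool) :
  \sum_(v <- children (x :: u)) f (chg v) =
    f (chgf x u) *+ (2 * chgf x u + 1)
  + f (chgf x u).+1 *+ 3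
  + f (chgf x u).+2 *+ (2 * samef x u).
Proof.
case: u => [|y u].
  rewrite /= !big_cons big_nil /=. case: x => /=; ring.
rewrite children_cons big_cons big_cons big_map /=.
rewrite chg_prepend.
case: x; case: y => /=;
 rewrite ?plusE ?(addn0, add0n, add1n, addn1, addnS, addSn); ring.
Qed.

Lemma cnt_children (R : comNzRingType) (f : nat -> R) (u : seq bool) :
  \sum_(v <- children u) f (count id v) =
    f (count id u) *+ (2 * count id u + 1)
  + f (count id u).+1 *+ (2 * count negb u + 1).
Proof.
elim: u f => [|x u IH] f.
  rewrite /= !big_cons big_nil /=; ring.
rewrite children_cons big_cons big_cons big_map /=.
have H := IH (fun m => f (x + m)%N); cbv beta in H.
rewrite H {H}.
case: x => /=;
 rewrite ?plusE ?(addn0, add0n, add1n, addn1, addnS, addSn); ring.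
Qed.


Section P.

Variable F : fieldType.
Definition pA : {poly F} := 1 - 'X^2.
Definition pB : {poly F} := 1 + 'X^2.
Definition Top (n : nat) (p : {poly F}) : {poly F} :=
  (2%:R + (n * 2)%:R * pA) * p - 'X * pA * p^`() *+ 2.

Lemma TopD n p q : Top n (p + q) = Top n p + Top n q.
Proof. rewrite /Top derivD; ring. Qed.
Lemma Top0 n : Top n 0 = 0.
Proof. rewrite /Top deriv0; ring. Qed.
Lemma Top_sum n (I : Type) (s : seq I) (f : I -> {poly F}) :
  Top n (\sum_(i <- s) f i) = \sum_(i <- s) Top n (f i).
Proof. by apply: (big_morph _ (TopD n) (Top0 n)). Qed.

Lemma polyL (c k : nat) :
  pA ^+ c * pB ^+ (c + k + 1 - c) *+ (2 * c + 1)
  + pA ^+ c.+1 * pB ^+ (c + k + 1 - c.+1) *+ 3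
  + pA ^+ c.+2 * pB ^+ (c + k + 1 - c.+2) *+ (2 * k)
  = Top (c + k + 1) (pA ^+ c * pB ^+ k).
Proof.
have e1 : (c + k + 1 - c = k.+1)%N by lia.
have e2 : (c + k + 1 - c.+1 = k)%N by lia.
have e3 : (c + k + 1 - c.+2 = k.-1)%N by lia.
rewrite {}e1 {}e2 {}e3 /Top derivM !deriv_exp /pA /pB !derivE.
case: c => [|c]; case: k => [|k] /=; rewrite ?expr0 ?mulr0n ?mul0rn;
  rewrite ?exprS; ring.
Qed.

Lemma polyP (t d : nat) :
  ((1 - 'X) ^+ t * (1 + 'X) ^+ (t + d + 1 - t) : {poly F}) *+ (2 * t + 1)
  + (1 - 'X) ^+ t.+1 * (1 + 'X) ^+ (t + d + 1 - t.+1) *+ (2 * d + 1)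
  = Top (t + d) ((1 - 'X) ^+ t * (1 + 'X) ^+ d).
Proof.
have e1 : (t + d + 1 - t = d.+1)%N by lia.
have e2 : (t + d + 1 - t.+1 = d)%N by lia.
rewrite {}e1 {}e2 /Top derivM !deriv_exp /pA !derivE.
case: t => [|t]; case: d => [|d] /=; rewrite ?expr0 ?mulr0n ?mul0rn;
  rewrite ?exprS; ring.
Qed.


Lemma size_children u v : v \in children u -> size v = (size u).+1.
Proof.
elim: u v => [|x u IH] v /=.
  by rewrite !inE => /orP[] /eqP ->.
rewrite !inE => /orP[/eqP -> //|/orP[/eqP -> //|/mapP[v' Hv' ->]]] /=.
by rewrite (IH _ Hv').
Qed.

Lemma size_W n u : u \in W n -> size u = n.
Proof.
elim: n u => [|n IH] u /=; first by rewrite inE => /eqP ->.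
move=> /flatten_mapP[u' Hu' Hu].
by rewrite (size_children Hu) (IH _ Hu').
Qed.

Lemma chgf_samef x u : (chgf x u + samef x u = size u)%N.
Proof. elim: u x => [|y u IH] x //=; rewrite -(IH y); case: (x == y) => /=; lia. Qed.

Lemma chg_same u : (chg u + same u = (size u).-1)%N.
Proof. by case: u => [|x u] //=; rewrite chgf_samef. Qed.

Definition ell u := pA ^+ chg u * pB ^+ same u.
Definition emm u : {poly F} := (1 - 'X) ^+ count id u * (1 + 'X) ^+ count negb u.


Lemma ell_children u : u != [::] ->
  \sum_(v <- children u) ell v = Top (size u) (ell u).
Proof.
case: u => [//|x u] _.
rewrite big_seq (eq_bigr (fun v => (fun j => pA ^+ j * pB ^+ ((size (x :: u)) - j)) (chg v))); last first.
  move=> v Hv; rewrite /ell; congr (_ * _ ^+ _).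
  have := chg_same v; rewrite (size_children Hv) /=; lia.
rewrite -big_seq (chg_children (fun j => pA ^+ j * pB ^+ ((size (x :: u)) - j))) /ell /= -(chgf_samef x u) /=.
by have := polyL (chgf x u) (samef x u); rewrite !addn1.
Qed.

Lemma count_negb u : (count id u + count negb u = size u)%N.
Proof. elim: u => [|x u IH] //=; case: x => /=; lia. Qed.

Lemma emm_children u :
  \sum_(v <- children u) emm v = Top (size u) (emm u).
Proof.
rewrite big_seq (eq_bigr (fun v => (fun t => (1 - 'X) ^+ t * (1 + 'X) ^+ ((size u).+1 - t)) (count id v))); last first.
  move=> v Hv; rewrite /emm; congr (_ * _ ^+ _).
  have := count_negb v; rewrite (size_children Hv) /=; lia.
rewrite -big_seq (cnt_children (fun t => (1 - 'X) ^+ t * (1 + 'X) ^+ ((size u).+1 - t))) /emm -(count_negb u) -polyP.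
by rewrite !addn1.
Qed.

Lemma LL_PP n : (0 < n)%N -> \sum_(u <- W n) ell u = \sum_(u <- W n) emm u.
Proof.
elim: n => [//|n IH] _.
case: n IH => [|n] IH.
  by rewrite /= !big_cons !big_nil /ell /emm /= ?addn0 ?expr0 ?expr1 ?mul1r ?mulr1; ring.
rewrite [LHS]sumW_succ [RHS]sumW_succ.
transitivity (\sum_(u <- W n.+1) Top n.+1 (ell u)).
  apply: eq_big_seq => u Hu.
  have Hne : u != [::] by apply/eqP => e; move: (size_W Hu); rewrite e.
  by rewrite (ell_children Hne) (size_W Hu).
transitivity (\sum_(u <- W n.+1) Top n.+1 (emm u)); last first.
  by apply: eq_big_seq => u Hu; rewrite emm_children (size_W Hu).
by rewrite -!Top_sum IH.
Qed.
End P.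

Lemma sum_sperm0 (R : comNzRingType) (g : seq bool -> R) :
  \sum_(p : sperm 0) g (ud p) = g [::].
Proof.
rewrite (eq_bigr (fun _ => g [::])); last by move=> p _; rewrite (size0nil (size_ud p)).
by rewrite sumr_const card_sperm.
Qed.

Lemma sum_sperm_W (R : comNzRingType) n (g : seq bool -> R) :
  \sum_(p : sperm n) g (ud p) = \sum_(u <- W n) g u.
Proof.
elim: n g => [|n IH] g.
  by rewrite sum_sperm0 /= big_cons big_nil addr0.
by rewrite sum_sperm_succ (IH (fun u => \sum_(v <- children u) g v)) sumW_succ.
Qed.

Lemma children_neg (R : comNzRingType) (g : seq bool -> R) u :
  \sum_(v <- children u) g (map negb v) = \sum_(v <- children (map negb u)) g v.
Proof.
elim: u g => [|x u IH] g.
  by rewrite /= !big_cons !big_nil /= !addr0 addrC.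
rewrite map_cons !children_cons !big_cons !big_map /=.
have H := IH (fun v => g (~~ x :: v)); cbv beta in H.
by rewrite H addrA [g _ + g _]addrC -addrA.
Qed.

Lemma sumW_neg (R : comNzRingType) n (g : seq bool -> R) :
  \sum_(u <- W n) g (map negb u) = \sum_(u <- W n) g u.
Proof.
elim: n g => [|n IH] g; first by rewrite /= !big_cons !big_nil.
rewrite !sumW_succ.
transitivity (\sum_(u <- W n) \sum_(v <- children (map negb u)) g v).
  by apply: eq_bigr => u _; rewrite children_neg.
by rewrite (IH (fun u => \sum_(v <- children u) g v)).
Qed.

Lemma chgf_neg x u : chgf (~~ x) (map negb u) = chgf x u.
Proof. elim: u x => [|y u IH] x //=; rewrite IH; by case: x; case: y. Qed.

Lemma chg_neg u : chg (map negb u) = chg u.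
Proof. by case: u => [|x u] //=; rewrite chgf_neg. Qed.

Theorem mainTheorem16 (F : fieldType) (n : nat) (x w : F) :
  (1 <= n)%N -> (2 : F) != 0 -> 1 + x != 0 -> 1 + w != 0 ->
  w ^+ 2 = (1 - x) / (1 + x) ->
  RBpos n x =
    x / 2 * ((1 + x) / 2) ^+ n.-1 * (1 + w) ^+ n
      * (eulerianB F n).[(1 - w) / (1 + w)].
Proof.
move=> Hn H2 Hx Hw Hw2.
set S := \sum_(u <- W n) x ^+ chg u.
have Wne : forall u, u \in W n -> exists y u', u = y :: u'.
  move=> u Hu; case: u Hu => [|y u'] Hu; last by exists y, u'.
  by move: (size_W Hu) Hn => /= <-.
pose G := fun u => if ~~ nth false u 0 then x ^+ (1 + chg u) else 0.
have E1 : RBpos n x = \sum_(u <- W n) G u.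
  rewrite /RBpos big_mkcond -(sum_sperm_W _ G); apply: eq_bigr => p _.
  by rewrite /G pos_ud // runB_ud.
have L : RBpos n x * 2 = x * S.
  rewrite E1 mulr_natr mulr2n.
  rewrite -{2}(sumW_neg n G) -big_split /= /S mulr_sumr.
  apply: eq_big_seq => u Hu; have [y [u' ->]] := Wne u Hu.
  rewrite /G chg_neg /=.
  by case: y; rewrite /= ?add0r ?addr0 add1n exprS.
have R1 : (1 + w) ^+ n * (eulerianB F n).[(1 - w) / (1 + w)]
          = \sum_(u <- W n) (emm F u).[w].
  rewrite /eulerianB horner_sum mulr_sumr -(sum_sperm_W _ (fun u => (emm F u).[w])).
  apply: eq_bigr => p _; rewrite hornerXn /emm !hornerE desB_ud.
  rewrite -{1}(size_ud p) -(count_negb (ud p)) exprD expr_div_n.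
  have : (1 + w) ^+ count id (ud p) != 0 by rewrite expf_neq0.
  move=> Hne; field; exact: Hne.
have R2 : \sum_(u <- W n) (emm F u).[w] = (2 / (1 + x)) ^+ n.-1 * S.
  rewrite -horner_sum -LL_PP // horner_sum /S mulr_sumr.
  apply: eq_big_seq => u Hu.
  have Hcs := chg_same u; rewrite (size_W Hu) in Hcs.
  rewrite /ell hornerM !horner_exp /pA /pB !hornerE.
  have e1 : 1 - w ^+ 2 = 2 / (1 + x) * x by rewrite Hw2; field.
  have e2 : 1 + w ^+ 2 = 2 / (1 + x) by rewrite Hw2; field.
  rewrite e1 e2 -Hcs exprD exprMn; ring.
rewrite -mulrA R1 R2.
have E3 : ((1 + x) / 2) ^+ n.-1 * ((2 / (1 + x)) ^+ n.-1) = 1.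
  have E4 : (1 + x) / 2 * (2 / (1 + x)) = 1 by field; rewrite Hx H2.
  by rewrite -exprMn E4 expr1n.
apply: (mulIf H2); rewrite L.
rewrite [X in _ = X](_ : _ = x / 2 * (((1 + x) / 2) ^+ n.-1 * (2 / (1 + x)) ^+ n.-1) * S * 2); last by ring.
by rewrite E3; field.
Qed.
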